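(* In the setting of the context, the enclosure $W_\Omega(T)\subset\overline{\mathbb{C}}$ has the following properties: (i) $W_\Omega(T)$ is symmetric with respect to the imaginary axis; (ii) $0\in W_\Omega(T)$ if and only if $0\in\overline{W(A)}$ or $c=0$; (iii) $\delta_+\in W_\Omega(T)$ if and only if $W(A)$ is unbounded or $0\in\overline{W(B)}$ or $c=0$; (iv) $\delta_-\in W_\Omega(T)$ if and only if $W(A)$ is unbounded or $0\in\overline{W(B)}$; (v) $\infty\in W_\Omega(T)$ if and only if $W(A)$ is unbounded.
   Context: Let $\mathcal{H}$ be a Hilbert space, $A$ a selfadjoint (possibly unbounded) operator in $\mathcal{H}$ and $B$ a nonzero bounded selfadjoint operator. Let $c\ge0$, $d>0$, $\theta:=\sqrt{c-d^2/4}$ (principal square root), $\delta_\pm:=\pm\theta-id/2$. $W(A),W(B)\subset\mathbb{R}$ are the numerical ranges. For real $\alpha,\beta$ let $p_{(\alpha,\beta)}(\omega):=(\alpha-\omega^2)(c-id\omega-\omega^2)-\beta\omega^2$, with roots $r_1,\dots,r_4$ labelled continuously in $(\alpha,\beta)\in\mathbb{R}^2$ and extended by limits to $\overline{\mathbb{R}}\times\mathbb{R}$ ($\overline{\mathbb{R}}=\mathbb{R}\cup\{\pm\infty\}$), with values in the Riemann sphere $\overline{\mathbb{C}}$. Let $\Omega:=\overline{W(A)}\times\overline{W(B)}$ (closure of $W(A)$ in $\overline{\mathbb{R}}$) and $W_\Omega(T):=\bigcup_{n=1}^4\bigcup_{(\alpha,\beta)\in\Omega}r_n(\alpha,\beta)$.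 *)

(* Defs.v *)
From HB Require Import structures.
From mathcomp Require Import all_boot all_order all_algebra.
From mathcomp Require Import all_classical all_reals all_analysis.
From mathcomp Require Import complex.

Set Implicit Arguments.
Unset Strict Implicit.
Unset Printing Implicit Defensive.

Import Order.TTheory GRing.Theory Num.Theory.
Import numFieldNormedType.Exports.
Local Open Scope classical_set_scope.
Local Open Scope ring_scope.
Local Open Scope complex_scope.

Record hilbert (R : realType) := Hilbert {
  hcar :> lmodType R[i];
  inner : hcar -> hcar -> R[i];
  inner_linear_l : forall (a : R[i]) (x y z : hcar),
      inner (a *: x + y) z = a * inner x z + inner y z;
  inner_conj_sym : forall x y : hcar, inner y x = (inner x y)^*;
  inner_ge0 : forall x : hcar, 0 <= inner x x;
  inner_eq0 : forall x : hcar, inner x x = 0 -> x = 0;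
  inner_complete : forall u : nat -> hcar,
      (forall e : R, 0 < e -> exists N : nat, forall m n : nat,
          (N <= m)%N -> (N <= n)%N ->
          Num.sqrt (complex.Re (inner (u m - u n) (u m - u n))) < e) ->
      exists l : hcar, forall e : R, 0 < e -> exists N : nat, forall n : nat,
          (N <= n)%N -> Num.sqrt (complex.Re (inner (u n - l) (u n - l))) < e
}.

Section Operators.
Variables (R : realType) (H : hilbert R).

Definition hnorm (x : H) : R := Num.sqrt (complex.Re (inner x x)).

(* A (possibly unbounded) linear operator A with domain D is selfadjoint:
   D is a dense linear subspace, A is linear on D, and A^* = A as graphs:
   y is in dom(A^* ) with A^* y = z  iff  y is in D and A y = z. *)
Definition selfadjoint (D : set H) (A : H -> H) : Prop :=
  [/\ D 0,
      (forall (a : R[i]) x y, D x -> D y -> D (a *: x + y)),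
      (forall (a : R[i]) x y, D x -> D y -> A (a *: x + y) = a *: A x + A y),
      (forall (x : H) (e : R), 0 < e -> exists y, D y /\ hnorm (x - y) < e) &
      (forall y z : H, (forall x, D x -> inner (A x) y = inner x z) <->
                       (D y /\ A y = z))].

Definition bounded_selfadjoint (B : H -> H) : Prop :=
  [/\ (forall (a : R[i]) x y, B (a *: x + y) = a *: B x + B y),
      (exists M : R, forall x, hnorm (B x) <= M * hnorm x) &
      (forall x y, inner (B x) y = inner x (B y))].

(* Numerical range W(A) = { <Ax,x> : x in dom A, ||x|| = 1 }, a subset of R
   (for a selfadjoint operator). *)
Definition numrange (D : set H) (A : H -> H) : set R :=
  [set r : R | exists x, D x /\ inner x x = 1 /\ inner (A x) x = r%:C].

End Operators.

Section Enclosure.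
Variable R : realType.

Definition pab (c d alpha beta : R) (w : R[i]) : R[i] :=
  (alpha%:C - w ^+ 2) * (c%:C - 'i * d%:C * w - w ^+ 2) - beta%:C * w ^+ 2.

Definition theta (c d : R) : R[i] := sqrtC ((c - d ^+ 2 / 4)%:C).
Definition delta_plus (c d : R) : R[i] := theta c d - 'i * (d / 2)%:C.
Definition delta_minus (c d : R) : R[i] := - theta c d - 'i * (d / 2)%:C.

(* Riemann sphere: [option R[i]], with [None] the point at infinity.
   Convergence of a complex sequence in the Riemann sphere. *)
Definition cvg_sphere (z : nat -> R[i]) (w : option R[i]) : Prop :=
  match w with
  | Some w0 => forall e : R, 0 < e -> exists N : nat,
      forall k : nat, (N <= k)%N -> `|z k - w0| < e%:C
  | None => forall M : R, exists N : nat,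
      forall k : nat, (N <= k)%N -> M%:C < `|z k|
  end.

(* W_Omega(T), with Omega = closure_{Rbar}(W(A)) x closure(W(B)):
   for finite alpha, the roots of p_(alpha,beta); for alpha = +-oo, the
   limits (in the Riemann sphere) of roots of p_(alpha_k,beta) as the real
   alpha_k tend to alpha. *)
Definition WOmega (c d : R) (WA WB : set R) : set (option R[i]) :=
  [set z | exists (a : \bar R) (b : R),
     closure (EFin @` WA) a /\ closure WB b /\
     match a with
     | EFin r => exists w, z = Some w /\ pab c d r b w = 0
     | _ => exists (al : nat -> R) (zs : nat -> R[i]),
              ((fun k => (al k)%:E) @ \oo --> a) /\
              (forall k, pab c d (al k) b (zs k) = 0) /\ cvg_sphere zs z
     end].

Definition unbounded_set (S : set R) : Prop :=
  ~ (exists M : R, forall r, S r -> `|r| <= M).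

End Enclosure.

(* Main.v *)
Require Import Defs.
From HB Require Import structures.
From mathcomp Require Import all_boot all_order all_algebra.
From mathcomp Require Import all_classical all_reals all_analysis.
From mathcomp Require Import complex.
From mathcomp Require Import ring lra.
Import Order.TTheory GRing.Theory Num.Theory.
Import numFieldNormedType.Exports.
Local Open Scope classical_set_scope.
Local Open Scope ring_scope.
Local Open Scope complex_scope.
Section Alg.
Variable F : closedFieldType.

Lemma root4 (a b e f : F) : exists s, s^+4 + a*s^+3 + b*s^+2 + e*s + f = 0.
Proof.
have [x Hx] := @solve_monicpoly F 4 (fun i => nth 0 [:: -f; -e; -b; -a] i) isT.
exists x; move: Hx; rewrite !big_ord_recr big_ord0 /= => ->; ring.
Qed.

Lemma root3 (a b e : F) : exists s, s^+3 + a*s^+2 + b*s + e = 0.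
Proof.
have [x Hx] := @solve_monicpoly F 3 (fun i => nth 0 [:: -e; -b; -a] i) isT.
exists x; move: Hx; rewrite !big_ord_recr big_ord0 /= => ->; ring.
Qed.

Lemma root2 (a b : F) : exists s, s^+2 + a*s + b = 0.
Proof.
have [x Hx] := @solve_monicpoly F 2 (fun i => nth 0 [:: -b; -a] i) isT.
exists x; move: Hx; rewrite !big_ord_recr big_ord0 /= => ->; ring.
Qed.

Lemma quartic_fact (a b e f : F) : exists s1 s2 s3 s4 : F,
  (forall h, h^+4 + a*h^+3 + b*h^+2 + e*h + f = (h-s1)*(h-s2)*(h-s3)*(h-s4)) /\
  b = s1*s2+s1*s3+s1*s4+s2*s3+s2*s4+s3*s4 /\ f = s1*s2*s3*s4.
Proof.
have [s1 H1] := root4 a b e f.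
have [s2 H2] := root3 (a + s1) (b + s1*(a+s1)) (e + s1*(b + s1*(a+s1))).
have [s3 H3] := root2 (a + s1 + s2) (b + s1*(a+s1) + s2*(a+s1+s2)).
have hf : f = -(s1^+4 + a*s1^+3 + b*s1^+2 + e*s1).
  by apply/eqP; rewrite -subr_eq0 opprK -H1; apply/eqP; ring.
have he : e = -(s2^+3 + (a + s1)*s2^+2 + (b + s1*(a+s1))*s2) - s1*(b + s1*(a+s1)).
  by apply/eqP; rewrite -subr_eq0 -H2; apply/eqP; ring.
have hb : b = -(s3^+2 + (a + s1 + s2)*s3) - s1*(a+s1) - s2*(a+s1+s2).
  by apply/eqP; rewrite -subr_eq0 -H3; apply/eqP; ring.
exists s1, s2, s3, (-(a + s1 + s2 + s3)).
rewrite hf he hb; split; [move=> h; ring | split; ring].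
Qed.
End Alg.
Section NormC.
Variable R : realType.
Local Notation nc := (@Normc.normc R).

Lemma nc_ge0 (z : R[i]) : 0 <= nc z.
Proof. by case: z => a b; rewrite /= sqrtr_ge0. Qed.

Lemma normE (z : R[i]) : `|z| = (nc z)%:C.
Proof. by case: z. Qed.

Lemma ncD (x y : R[i]) : nc (x + y) <= nc x + nc y.
Proof. exact: le_normcD. Qed.

Lemma ncN (x : R[i]) : nc (- x) = nc x.
Proof. exact: normcN. Qed.

Lemma ncM (x y : R[i]) : nc (x * y) = nc x * nc y.
Proof. exact: Normc.normcM. Qed.

Lemma ncR (x : R) : nc x%:C = `|x|.
Proof. by rewrite /= expr0n /= addr0 sqrtr_sqr. Qed.

Lemma ncB (x y : R[i]) : nc x - nc y <= nc (x - y).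
Proof.
have := ncD (x - y) y; rewrite subrK; lra.
Qed.

Lemma nc6 (x1 x2 x3 x4 x5 x6 : R[i]) :
  nc (x1 + x2 + x3 + x4 + x5 + x6) <= nc x1 + nc x2 + nc x3 + nc x4 + nc x5 + nc x6.
Proof.
have h1 := ncD (x1 + x2 + x3 + x4 + x5) x6.
have h2 := ncD (x1 + x2 + x3 + x4) x5.
have h3 := ncD (x1 + x2 + x3) x4.
have h4 := ncD (x1 + x2) x3.
have h5 := ncD x1 x2.
lra.
Qed.

Lemma aux_near {eps x y u v : R} : 0 < eps -> 0 <= x -> 0 <= y ->
  eps <= u -> eps <= v -> eps^+2 * (x*y) <= x*y*u*v.
Proof.
move=> he hx hy hu hv.
have h : eps^+2 <= u * v by rewrite expr2; apply: ler_pM; lra.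
have hxy : 0 <= x * y by exact: mulr_ge0.
rewrite -mulrA [X in _ <= X]mulrC; exact: ler_wpM2r.
Qed.

Lemma vieta_near (s1 s2 s3 s4 : R[i]) (eps : R) : 0 < eps ->
  eps <= nc s1 -> eps <= nc s2 -> eps <= nc s3 -> eps <= nc s4 ->
  eps^+2 * nc (s1*s2+s1*s3+s1*s4+s2*s3+s2*s4+s3*s4) <= 6%:R * nc (s1*s2*s3*s4).
Proof.
move=> he h1 h2 h3 h4.
have H := nc6 (s1*s2) (s1*s3) (s1*s4) (s2*s3) (s2*s4) (s3*s4).
rewrite !ncM in H *.
have g1 := nc_ge0 s1; have g2 := nc_ge0 s2; have g3 := nc_ge0 s3; have g4 := nc_ge0 s4.
set n1 := nc s1 in H g1 h1 *; set n2 := nc s2 in H g2 h2 *;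
set n3 := nc s3 in H g3 h3 *; set n4 := nc s4 in H g4 h4 *.
have a1 := aux_near he g1 g2 h3 h4.
have a2 := aux_near he g1 g3 h2 h4.
have a3 := aux_near he g1 g4 h2 h3.
have a4 := aux_near he g2 g3 h1 h4.
have a5 := aux_near he g2 g4 h1 h3.
have a6 := aux_near he g3 g4 h1 h2.
have e2 : 0 <= eps^+2 by exact: sqr_ge0.
have := ler_wpM2l e2 H.
have E2 : n1 * n3 * n2 * n4 = n1 * n2 * n3 * n4 by ring.
have E3 : n1 * n4 * n2 * n3 = n1 * n2 * n3 * n4 by ring.
have E4 : n2 * n3 * n1 * n4 = n1 * n2 * n3 * n4 by ring.
have E5 : n2 * n4 * n1 * n3 = n1 * n2 * n3 * n4 by ring.
have E6 : n3 * n4 * n1 * n2 = n1 * n2 * n3 * n4 by ring.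
rewrite E2 E3 E4 E5 E6 in a2 a3 a4 a5 a6.
rewrite !mulrDr; lra.
Qed.

Lemma vieta_far (s1 s2 s3 s4 : R[i]) (M : R) :
  nc s1 <= M -> nc s2 <= M -> nc s3 <= M -> nc s4 <= M ->
  nc (s1*s2+s1*s3+s1*s4+s2*s3+s2*s4+s3*s4) <= 6%:R * M^+2.
Proof.
move=> h1 h2 h3 h4.
have H := nc6 (s1*s2) (s1*s3) (s1*s4) (s2*s3) (s2*s4) (s3*s4).
rewrite !ncM in H.
have g1 := nc_ge0 s1; have g2 := nc_ge0 s2; have g3 := nc_ge0 s3; have g4 := nc_ge0 s4.
have P : forall x y, 0 <= x -> 0 <= y -> x <= M -> y <= M -> x * y <= M^+2.
  by move=> x y hx hy hxM hyM; rewrite expr2; apply: ler_pM.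
have := P _ _ g1 g2 h1 h2; have := P _ _ g1 g3 h1 h3; have := P _ _ g1 g4 h1 h4.
have := P _ _ g2 g3 h2 h3; have := P _ _ g2 g4 h2 h4; have := P _ _ g3 g4 h3 h4.
lra.
Qed.

End NormC.
Section Roots.
Variable R : realType.
Local Notation nc := (@Normc.normc R).

Lemma root_near (c d be : R) (dl : R[i]) (eps : R) : 0 < eps ->
  c%:C - 'i * d%:C * dl - dl^+2 = 0 ->
  exists L : R, forall al : R, L < `|al| ->
    exists w, pab c d al be w = 0 /\ nc (w - dl) < eps.
Proof.
move=> he hq.
set K0 := 6%:R*dl^+2 + 3%:R*('i*d%:C)*dl - c%:C - be%:C.
exists (nc K0 + 6%:R * nc (be%:C * dl^+2) / eps^+2) => al Hal.
have Hsh : forall h, pab c d al be (dl + h) = h^+4 + (4%:R*dl + 'i*d%:C)*h^+3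
   + (K0 - al%:C)*h^+2
   + (4%:R*dl^+3 + 3%:R*('i*d%:C)*dl^+2 - 2%:R*(al%:C+c%:C+be%:C)*dl - al%:C*('i*d%:C))*h
   + pab c d al be dl.
  by move=> h; rewrite /pab /K0; ring.
have [s1 [s2 [s3 [s4 [Hid [Hb Hf]]]]]] := @quartic_fact _
   (4%:R*dl + 'i*d%:C) (K0 - al%:C)
   (4%:R*dl^+3 + 3%:R*('i*d%:C)*dl^+2 - 2%:R*(al%:C+c%:C+be%:C)*dl - al%:C*('i*d%:C))
   (pab c d al be dl).
have Hr : forall s, (s - s1) * (s - s2) * (s - s3) * (s - s4) = 0 ->
    exists w, pab c d al be w = 0 /\ nc (w - dl) = nc s.
  by move=> s hs; exists (dl + s); rewrite Hsh Hid hs (addrC dl) addrK.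
have [l1|g1] := ltrP (nc s1) eps.
  have [|w [hw e]] := Hr s1; first by rewrite subrr !(mul0r, mulr0).
  by exists w; rewrite e.
have [l2|g2] := ltrP (nc s2) eps.
  have [|w [hw e]] := Hr s2; first by rewrite subrr !(mul0r, mulr0).
  by exists w; rewrite e.
have [l3|g3] := ltrP (nc s3) eps.
  have [|w [hw e]] := Hr s3; first by rewrite subrr !(mul0r, mulr0).
  by exists w; rewrite e.
have [l4|g4] := ltrP (nc s4) eps.
  have [|w [hw e]] := Hr s4; first by rewrite subrr !(mul0r, mulr0).
  by exists w; rewrite e.
exfalso.
have V := @vieta_near _ s1 s2 s3 s4 eps he g1 g2 g3 g4.
rewrite -Hb -Hf in V.
have Hpd : pab c d al be dl = -(be%:C*dl^+2) by rewrite /pab hq mulr0 sub0r.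
rewrite Hpd ncN in V.
have Hn : `|al| - nc K0 <= nc (K0 - al%:C).
  by rewrite -[nc (K0 - _)]ncN opprB -ncR; exact: ncB.
set nf := nc (be%:C * dl ^+ 2) in Hal V.
set nb := nc (K0 - al%:C) in V Hn.
have e2 : 0 < eps^+2 by exact: exprn_gt0.
have H1 : 6%:R * nf / eps^+2 < `|al| - nc K0 by lra.
rewrite ltr_pdivrMr // in H1.
have H2 : eps^+2 * (`|al| - nc K0) <= eps^+2 * nb by apply: ler_wpM2l => //; exact: ltW.
rewrite mulrC in H1; lra.
Qed.

Lemma root_far (c d be : R) (M : R) :
  exists L : R, forall al : R, L < `|al| ->
    exists w, pab c d al be w = 0 /\ M < nc w.
Proof.
exists (6%:R * M^+2 + nc (c%:C + be%:C)) => al Hal.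
have Hsh : forall h, pab c d al be h = h^+4 + ('i*d%:C)*h^+3
   + (-(al%:C + (c%:C + be%:C)))*h^+2 + (-(al%:C*('i*d%:C)))*h + al%:C*c%:C.
  by move=> h; rewrite /pab; ring.
have [s1 [s2 [s3 [s4 [Hid [Hb Hf]]]]]] := @quartic_fact _
   ('i*d%:C) (-(al%:C + (c%:C + be%:C))) (-(al%:C*('i*d%:C))) (al%:C*c%:C).
have Hr : forall s, (s - s1) * (s - s2) * (s - s3) * (s - s4) = 0 ->
    pab c d al be s = 0.
  by move=> s hs; rewrite Hsh Hid hs.
have [l1|g1] := ltrP M (nc s1).
  by exists s1; split => //; apply: Hr; rewrite subrr !mul0r.
have [l2|g2] := ltrP M (nc s2).
  by exists s2; split => //; apply: Hr; rewrite subrr !(mul0r, mulr0).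
have [l3|g3] := ltrP M (nc s3).
  by exists s3; split => //; apply: Hr; rewrite subrr !(mul0r, mulr0).
have [l4|g4] := ltrP M (nc s4).
  by exists s4; split => //; apply: Hr; rewrite subrr !(mul0r, mulr0).
exfalso.
have V := @vieta_far _ s1 s2 s3 s4 M g1 g2 g3 g4.
rewrite -Hb ncN in V.
have Hn : `|al| - nc (c%:C + be%:C) <= nc (al%:C + (c%:C + be%:C)).
  by have := @ncB _ (al%:C) (-(c%:C + be%:C)); rewrite opprK ncN ncR.
lra.
Qed.

End Roots.
Section Seqs.
Variable R : realType.
Local Notation nc := (@Normc.normc R).

Lemma build_seq (c d be s : R) (Q : nat -> R[i] -> Prop) : `|s| = 1 ->
  (forall k, exists L : R, forall al : R, L < `|al| ->
      exists w, pab c d al be w = 0 /\ Q k w) ->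
  exists (al : nat -> R) (zs : nat -> R[i]),
    (forall k, pab c d (al k) be (zs k) = 0 /\ Q k (zs k)) /\
    (forall k, k%:R <= s * al k).
Proof.
move=> hs H.
have H' : forall k, exists p : R * R[i],
    (pab c d p.1 be p.2 = 0 /\ Q k p.2) /\ k%:R <= s * p.1.
  move=> k; have [L HL] := H k.
  have hL := ler_norm L; have hL0 := normr_ge0 L; have hk : 0 <= k%:R :> R by exact: ler0n.
  have [|w hw] := HL (s * (`|L| + k%:R + 1)).
    rewrite normrM hs mul1r (@ger0_norm _ (`|L| + k%:R + 1)); lra.
  exists (s * (`|L| + k%:R + 1), w); split => //=.
  rewrite mulrA -expr2 -(real_normK (num_real s)) hs expr1n mul1r; lra.
have [f Hf] := choice H'.
exists (fun k => (f k).1), (fun k => (f k).2); split => k; apply (Hf k).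
Qed.

Lemma cvg_pinf (al : nat -> R) : (forall k, k%:R <= al k) ->
  (fun k => (al k)%:E) @ \oo --> +oo%E.
Proof.
move=> H; apply/cvgeyPge => A; exists (Num.Def.trunc A).+1 => // k /= Hk.
rewrite lee_fin; apply: le_trans (H k).
apply: le_trans (ltW (truncnS_gt A)) _; by rewrite ler_nat.
Qed.

Lemma cvg_ninf (al : nat -> R) : (forall k, k%:R <= - al k) ->
  (fun k => (al k)%:E) @ \oo --> -oo%E.
Proof.
move=> H; apply/cvgeNyPle => A; exists (Num.Def.trunc (- A)).+1 => // k /= Hk.
rewrite lee_fin; have := H k; have := truncnS_gt (- A).
have : ((Num.Def.trunc (- A)).+1%:R <= k%:R :> R) by rewrite ler_nat.
lra.
Qed.

Lemma sph_some (zs : nat -> R[i]) w :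
  (forall k, nc (zs k - w) < (k.+1%:R)^-1) -> cvg_sphere zs (Some w).
Proof.
move=> H e he; exists (Num.Def.trunc e^-1) => k Hk.
rewrite normE ltcR; apply: lt_le_trans (H k) _.
rewrite -[X in _ <= X]invrK lef_pV2 ?posrE ?invr_gt0 //.
apply: ltW; apply: lt_le_trans (truncnS_gt _) _; by rewrite ler_nat.
Qed.

Lemma sph_none (zs : nat -> R[i]) :
  (forall k, k%:R < nc (zs k)) -> cvg_sphere zs None.
Proof.
move=> H M; exists (Num.Def.trunc M).+1 => k Hk.
rewrite normE ltcR; apply: lt_trans (H k).
apply: lt_le_trans (truncnS_gt _) _; by rewrite ler_nat.
Qed.

Lemma inf_seq (c d be : R) (a : \bar R) (Q : nat -> R[i] -> Prop) :
  a = +oo%E \/ a = -oo%E ->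
  (forall k, exists L : R, forall al : R, L < `|al| ->
      exists w, pab c d al be w = 0 /\ Q k w) ->
  exists (al : nat -> R) (zs : nat -> R[i]),
    ((fun k => (al k)%:E) @ \oo --> a) /\
    (forall k, pab c d (al k) be (zs k) = 0) /\ (forall k, Q k (zs k)).
Proof.
move=> [->|->] H.
  have [al [zs [H1 H2]]] := @build_seq c d be 1 Q (normr1 _) H.
  exists al, zs; split; [apply: cvg_pinf => k; by rewrite -[al k]mul1r|].
  by split => k; case: (H1 k).
have [al [zs [H1 H2]]] := @build_seq c d be (-1) Q (normrN1 _) H.
exists al, zs; split; [apply: cvg_ninf => k; by rewrite -mulN1r|].
by split => k; case: (H1 k).
Qed.

End Seqs.
Section ERealCl.
Variable R : realType.

Lemma cl_pinf_unb (S : set R) : closure (EFin @` S) +oo%E -> unbounded_set S.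
Proof.
move=> Hcl [M HM].
have [y [[r Sr <-] /= hy]] := Hcl _ (nbhs_open_ereal_pinfty M).
have := HM r Sr; have := ler_norm r; rewrite lte_fin in hy; lra.
Qed.

Lemma cl_ninf_unb (S : set R) : closure (EFin @` S) -oo%E -> unbounded_set S.
Proof.
move=> Hcl [M HM].
have [y [[r Sr <-] /= hy]] := Hcl _ (nbhs_open_ereal_ninfty (- M)).
have := HM r Sr; have := ler_norm (- r); rewrite normrN lte_fin in hy *; lra.
Qed.

Lemma cl_pinf (S : set R) : (forall M, exists r, S r /\ M < r) ->
  closure (EFin @` S) +oo%E.
Proof.
move=> H B [M [_ HM]]; have [r [Sr Mr]] := H M.
by exists r%:E; split; [exists r | apply: HM; rewrite lte_fin].
Qed.

Lemma cl_ninf (S : set R) : (forall M, exists r, S r /\ r < M) ->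
  closure (EFin @` S) -oo%E.
Proof.
move=> H B [M [_ HM]]; have [r [Sr Mr]] := H M.
by exists r%:E; split; [exists r | apply: HM; rewrite lte_fin].
Qed.

Lemma unb_cl (S : set R) : unbounded_set S ->
  closure (EFin @` S) +oo%E \/ closure (EFin @` S) -oo%E.
Proof.
move=> Hu.
case: (pselect (forall M, exists r, S r /\ M < r)) => [h|hp]; first by left; exact: cl_pinf.
case: (pselect (forall M, exists r, S r /\ r < M)) => [h|hn]; first by right; exact: cl_ninf.
exfalso; apply: Hu.
have [M1 HM1] := (existsNP _).2 hp.
have [M2 HM2] := (existsNP _).2 hn.
exists (`|M1| + `|M2|) => r Sr.
have h1 : r <= M1 by rewrite leNgt; apply/negP => h; apply: HM1; exists r.
have h2 : M2 <= r by rewrite leNgt; apply/negP => h; apply: HM2; exists r.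
have := ler_norm M1; have := ler_norm (- M2); rewrite normrN => ha hb.
have := normr_ge0 M1; have := normr_ge0 M2 => hc hd.
rewrite ler_norml; apply/andP; split; lra.
Qed.

End ERealCl.
Section Delta.
Variable R : realType.
Local Notation nc := (@Normc.normc R).

Lemma sqr_i' : ('i : R[i]) ^+ 2 = -1.
Proof. exact: sqr_i. Qed.

Lemma theta_sq (c d : R) :
  theta c d ^+ 2 = c%:C - (d / 2)%:C ^+ 2.
Proof.
rewrite /theta sqrtCK.
have -> : c - d ^+ 2 / 4 = c - (d / 2) ^+ 2 by field.
by rewrite rmorphB rmorphXn.
Qed.

Lemma d_half (d : R) : d%:C = 2%:R * (d / 2)%:C.
Proof.
rewrite {1}(_ : d = 2%:R * (d / 2)); last by field.
by rewrite rmorphM rmorph_nat.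
Qed.

Lemma q_delta_plus (c d : R) :
  c%:C - 'i * d%:C * delta_plus c d - delta_plus c d ^+ 2 = 0.
Proof.
rewrite /delta_plus (d_half d); set t := theta c d; set D := (d / 2)%:C.
transitivity (c%:C - t^+2 - D^+2 + ('i^+2 + 1) * D^+2); first by ring.
by rewrite sqr_i' theta_sq -/D; ring.
Qed.

Lemma q_delta_minus (c d : R) :
  c%:C - 'i * d%:C * delta_minus c d - delta_minus c d ^+ 2 = 0.
Proof.
rewrite /delta_minus (d_half d); set t := theta c d; set D := (d / 2)%:C.
transitivity (c%:C - t^+2 - D^+2 + ('i^+2 + 1) * D^+2); first by ring.
by rewrite sqr_i' theta_sq -/D; ring.
Qed.

Lemma theta_not_neg (c d : R) : 0 < d -> theta c d <> - ('i * (d / 2)%:C).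
Proof.
move=> hd ht.
have := @Im_rootC_ge0 _ 2 ((c - d ^+ 2 / 4)%:C) isT.
rewrite -/(sqrtC _) -/(theta c d) ht -complexIm /= ler0c; lra.
Qed.

Lemma delta_plus0 (c d : R) : 0 < d -> (delta_plus c d = 0 <-> c = 0).
Proof.
move=> hd; split.
  rewrite /delta_plus => /eqP; rewrite subr_eq0 => /eqP ht.
  have := theta_sq c d; rewrite ht exprMn sqr_i' => h.
  have : c%:C = 0 :> R[i].
    by rewrite -[RHS](subrr (-1 * (d/2)%:C^+2)) {1}h; ring.
  by move=> [].
move=> hc; subst c.
have h := theta_sq 0 d.
have h2 : (theta 0 d - 'i * (d / 2)%:C) * (theta 0 d + 'i * (d / 2)%:C) = 0.
  transitivity (theta 0 d ^+ 2 + (d / 2)%:C ^+ 2 - ('i ^+ 2 + 1) * (d / 2)%:C ^+ 2); first by ring.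
  rewrite h sqr_i' rmorph0; ring.
move/eqP: h2; rewrite mulf_eq0 => /orP[/eqP|].
  by rewrite /delta_plus => ->.
rewrite addr_eq0 => /eqP /(@theta_not_neg 0 d hd) [].
Qed.

Lemma delta_minus_neq0 (c d : R) : 0 < d -> delta_minus c d <> 0.
Proof.
move=> hd /eqP; rewrite /delta_minus subr_eq0 => /eqP ht.
apply: (@theta_not_neg c d hd).
by rewrite -[theta c d]opprK ht.
Qed.

Lemma conj_i : ('i : R[i])^* = - 'i.
Proof. by apply/eqP; rewrite eq_complex /= oppr0 !eqxx. Qed.

Lemma cjD (x y : R[i]) : (x + y)^* = x^* + y^*. Proof. exact: rmorphD. Qed.
Lemma cjB (x y : R[i]) : (x - y)^* = x^* - y^*. Proof. exact: rmorphB. Qed.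
Lemma cjM (x y : R[i]) : (x * y)^* = x^* * y^*. Proof. exact: rmorphM. Qed.
Lemma cjN (x : R[i]) : (- x)^* = - x^*. Proof. exact: rmorphN. Qed.
Lemma cjX (x : R[i]) n : (x ^+ n)^* = x^* ^+ n. Proof. exact: rmorphXn. Qed.

Lemma pab_conj (c d r b : R) (w : R[i]) :
  pab c d r b (- w^*) = (pab c d r b w)^*.
Proof.
case: w => x y; rewrite /pab !expr2 /=.
apply/eqP; rewrite eq_complex /=; apply/andP; split; apply/eqP; ring.
Qed.

End Delta.
Section Sym.
Variable R : realType.
Local Notation nc := (@Normc.normc R).

Lemma norm_conj_diff (z w : R[i]) : `|- z^* - - w^*| = `|z - w|.
Proof.
case: z => a b; case: w => x y; rewrite !normE /=.
by congr (_%:C); congr Num.sqrt; ring.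
Qed.

Lemma WO_sym (c d : R) (WA WB : set R) (w : R[i]) :
  WOmega c d WA WB (Some w) -> WOmega c d WA WB (Some (- w^*)).
Proof.
move=> [a [b [Ha [Hb Hm]]]]; exists a, b; split => //; split => //.
move: Hm; case: a Ha => [r| |] Ha /=.
- move=> [w' [[<-] hp]]; exists (- w^*); split => //.
  by rewrite pab_conj hp; apply/eqP; rewrite eq_complex /= oppr0 !eqxx.
- move=> [al [zs [Hal [Hr Hc]]]]; exists al, (fun k => - (zs k)^*).
  split => //; split.
    by move=> k; rewrite pab_conj Hr; apply/eqP; rewrite eq_complex /= oppr0 !eqxx.
  move=> e he; have [N HN] := Hc e he; exists N => k hk.
  by rewrite norm_conj_diff; exact: HN.
- move=> [al [zs [Hal [Hr Hc]]]]; exists al, (fun k => - (zs k)^*).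
  split => //; split.
    by move=> k; rewrite pab_conj Hr; apply/eqP; rewrite eq_complex /= oppr0 !eqxx.
  move=> e he; have [N HN] := Hc e he; exists N => k hk.
  by rewrite norm_conj_diff; exact: HN.
Qed.

Lemma conj_invol (w : R[i]) : - (- w^*)^* = w.
Proof. by case: w => x y; apply/eqP; rewrite eq_complex /= !opprK !eqxx. Qed.

Lemma nc_id (d : R) (z : R[i]) : nc ('i * d%:C * z) = `|d| * nc z.
Proof.
apply: complexI; rewrite -normE !normrM normCi mul1r !normE ncR.
by rewrite rmorphM.
Qed.

Lemma nc_sq (z : R[i]) : nc (z ^+ 2) = nc z * nc z.
Proof.
by apply: complexI; rewrite -normE normrX normE rmorphM expr2.
Qed.

Lemma small_root_bound (c d al be : R) (z : R[i]) : 0 < c ->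
  nc z <= 1 -> nc z <= c / (2%:R * (`|d| + 1)) ->
  pab c d al be z = 0 -> `|al| <= 2%:R * `|be| / c + 1.
Proof.
move=> hc h1 h2 hp.
set nz := nc z in h1 h2.
have g0 : 0 <= nz by exact: nc_ge0.
have hd0 := normr_ge0 d.
have hq : c / 2%:R <= nc (c%:C - 'i * d%:C * z - z ^+ 2).
  have t1 := @ncB _ (c%:C) ('i * d%:C * z + z ^+ 2).
  have t2 := @ncD _ ('i * d%:C * z) (z ^+ 2).
  rewrite ncR ger0_norm in t1; last exact: ltW.
  rewrite opprD addrA in t1.
  rewrite nc_id nc_sq -/nz in t2.
  have t3 : nz * nz <= nz by rewrite -[X in _ <= X]mulr1; apply: ler_wpM2l.
  have t4 : (`|d| + 1) * nz <= c / 2%:R.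
    rewrite mulrC -ler_pdivlMr; last lra.
    by apply: (le_trans h2); rewrite invfM mulrA.
  lra.
have he : nc (al%:C - z ^+ 2) * nc (c%:C - 'i * d%:C * z - z ^+ 2) = `|be| * (nz * nz).
  move/eqP: hp; rewrite /pab subr_eq0 => /eqP hp.
  by rewrite -ncM hp ncM ncR nc_sq.
have hn : 0 <= nc (al%:C - z ^+ 2) by exact: nc_ge0.
have hb0 := normr_ge0 be.
have t5 : nz * nz <= 1 by rewrite -(mulr1 1); apply: ler_pM.
have t6 : `|be| * (nz * nz) <= `|be| by rewrite -[X in _ <= X]mulr1; apply: ler_wpM2l.
have t7 : nc (al%:C - z ^+ 2) * (c / 2%:R) <= `|be|.
  apply: le_trans t6; rewrite -he; apply: ler_wpM2l => //.
have t8 : nc (al%:C - z ^+ 2) <= 2%:R * `|be| / c.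
  rewrite ler_pdivlMr //; rewrite mulrA in t7; lra.
have t9 : `|al| <= nc (al%:C - z ^+ 2) + nz * nz.
  have := @ncD _ (al%:C - z ^+ 2) (z ^+ 2); rewrite subrK ncR nc_sq //.
lra.
Qed.

End Sym.
Section Hilb.
Variable R : realType.
Variable H : hilbert R.

Lemma inner0l (z : H) : inner 0 z = 0.
Proof.
have := inner_linear_l 1 (0 : H) 0 z; rewrite scaler0 addr0 mul1r.
by rewrite -{1}[inner 0 z]addr0 => /addrI <-.
Qed.

Lemma inner_scale_l (a : R[i]) (x z : H) : inner (a *: x) z = a * inner x z.
Proof. by have := inner_linear_l a x 0 z; rewrite addr0 inner0l addr0. Qed.

Lemma conj_realM (r : R) (v : R[i]) : (r%:C * v)^* = r%:C * v^*.
Proof. by case: v => p q; apply/eqP; rewrite eq_complex /=; apply/andP; split; apply/eqP; ring. Qed.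

Lemma inner_scale_r (r : R) (x y : H) : inner x (r%:C *: y) = r%:C * inner x y.
Proof.
rewrite (inner_conj_sym (r%:C *: y) x) (inner_conj_sym y x) inner_scale_l.
exact: conj_realM.
Qed.

Lemma selfconj_real (v : R[i]) : v = v^* -> exists r : R, v = r%:C.
Proof.
case: v => p q [hq]; exists p; apply/eqP; rewrite eq_complex /= eqxx /=.
apply/eqP; lra.
Qed.

Lemma unit_vec (x : H) : x != 0 ->
  exists a : R, inner (a%:C *: x) (a%:C *: x) = 1.
Proof.
move=> hx.
have hge := inner_ge0 x.
have hne : inner x x != 0 by apply: contra hx => /eqP /inner_eq0 ->.
move: hge hne; case E: (inner x x) => [p q].
rewrite lecE /= => /andP [/eqP hq hp] hne.
have hp0 : 0 < p.
  rewrite lt_def hp andbT; apply: contra hne => /eqP hp0.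
  by apply/eqP; rewrite hp0 hq.
exists (Num.sqrt p)^-1.
rewrite inner_scale_l inner_scale_r E hq.
have hs : 0 < Num.sqrt p by rewrite sqrtr_gt0.
have : (Num.sqrt p)^-1 * ((Num.sqrt p)^-1 * p) = 1.
  rewrite mulrA -invfM -expr2 sqr_sqrtr; last exact: ltW.
  by apply: mulVf; rewrite gt_eqF.
move=> h; apply/eqP; rewrite eq_complex /=; apply/andP; split; apply/eqP;
  rewrite !(mul0r, mulr0, subr0, addr0, oppr0) ?h //.
Qed.

Lemma WB_nonempty (B : H -> H) : bounded_selfadjoint B -> (exists x, B x != 0) ->
  exists r, numrange [set: H] B r.
Proof.
move=> [lin _ sym] [x hx].
have B0 : B 0 = 0.
  have := lin 1 0 0; rewrite scaler0 addr0 scale1r.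
  by rewrite -{1}[B 0]addr0 => /addrI <-.
have x0 : x != 0 by apply: contra hx => /eqP ->; rewrite B0.
have [a ha] := unit_vec x x0.
set u := a%:C *: x in ha *.
have [r hr] : exists r : R, inner (B u) u = r%:C.
  apply: selfconj_real; by rewrite -inner_conj_sym sym.
by exists r, u.
Qed.

Lemma WA_nonempty (D : set H) (A : H -> H) : selfadjoint D A ->
  (exists x : H, x != 0) -> exists r, numrange D A r.
Proof.
move=> [D0 Dlin _ Ddense Dadj] [x hx].
have hge := inner_ge0 x.
have hne : inner x x != 0 by apply: contra hx => /eqP /inner_eq0 ->.
have hpos : 0 < hnorm x.
  rewrite /hnorm sqrtr_gt0; move: hge hne; case: (inner x x) => p q.
  rewrite lecE /= => /andP [/eqP hq hp] hne.
  rewrite lt_def hp andbT; apply: contra hne => /eqP hp0.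
  by apply/eqP; rewrite hp0 hq.
have [y [Dy hy]] := Ddense x _ hpos.
have y0 : y != 0.
  by apply/eqP => y0; move: hy; rewrite y0 subr0 ltxx.
have [a ha] := unit_vec y y0.
set u := a%:C *: y in ha *.
have Du : D u by rewrite /u -[_ *: y]addr0; exact: Dlin.
have sym : forall v, D v -> inner (A v) u = inner v (A u).
  by have [_ h] := Dadj u (A u); apply: h.
have [r hr] : exists r : R, inner (A u) u = r%:C.
  apply: selfconj_real; by rewrite -inner_conj_sym sym.
by exists r, u.
Qed.

End Hilb.
Section Main.
Variable R : realType.
Local Notation nc := (@Normc.normc R).

Lemma W_from_inf (c d : R) (WA WB : set R) (b : R) (z : option R[i])
  (Q : nat -> R[i] -> Prop) :
  closure WB b -> unbounded_set WA ->
  (forall k, exists L : R, forall al : R, L < `|al| ->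
      exists w, pab c d al b w = 0 /\ Q k w) ->
  (forall zs : nat -> R[i], (forall k, Q k (zs k)) -> cvg_sphere zs z) ->
  WOmega c d WA WB z.
Proof.
move=> Hb Hu HQ Hs.
have [h|h] := @unb_cl _ _ Hu.
  have [al [zs [H1 [H2 H3]]]] := @inf_seq R c d b +oo%E Q (or_introl erefl) HQ.
  exists +oo%E, b; split => //; split => //; exists al, zs; split => //; split => //.
  exact: Hs.
have [al [zs [H1 [H2 H3]]]] := @inf_seq R c d b -oo%E Q (or_intror erefl) HQ.
exists -oo%E, b; split => //; split => //; exists al, zs; split => //; split => //.
exact: Hs.
Qed.

Lemma near_Q (c d b : R) (dl : R[i]) :
  c%:C - 'i * d%:C * dl - dl^+2 = 0 ->
  forall k : nat, exists L : R, forall al : R, L < `|al| ->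
      exists w, pab c d al b w = 0 /\ nc (w - dl) < (k.+1%:R)^-1.
Proof.
by move=> hq k; apply: root_near; rewrite ?invr_gt0 ?ltr0n.
Qed.

Lemma far_Q (c d b : R) :
  forall k : nat, exists L : R, forall al : R, L < `|al| ->
      exists w, pab c d al b w = 0 /\ k%:R < nc w.
Proof. move=> k; exact: root_far. Qed.

Lemma pab_delta (c d al b : R) (dl : R[i]) :
  c%:C - 'i * d%:C * dl - dl^+2 = 0 ->
  pab c d al b dl = -(b%:C * dl^+2).
Proof. by move=> hq; rewrite /pab hq mulr0 sub0r. Qed.

Lemma no_zero_lim (c d b : R) (a : \bar R) (al : nat -> R) (zs : nat -> R[i]) :
  0 < c -> (a = +oo%E \/ a = -oo%E) ->
  ((fun k => (al k)%:E) @ \oo --> a) ->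
  (forall k, pab c d (al k) b (zs k) = 0) -> cvg_sphere zs (Some 0) -> False.
Proof.
move=> hc ha Hal Hr Hc.
have he2 : 0 < c / (2%:R * (`|d| + 1)).
  by apply: divr_gt0 => //; apply: mulr_gt0; rewrite ?ltr0n //; have := normr_ge0 d; lra.
have [N1 H1] := Hc 1 ltr01.
have [N2 H2] := Hc _ he2.
set K := 2%:R * `|b| / c + 1.
have [N3 H3] : exists N3 : nat, forall k, (N3 <= k)%N -> K < `|al k|.
  case: ha => ha; subst a.
    have [N3 _ HN3] := cvgey_gt Hal K.
    exists N3 => k hk; have := HN3 k hk; rewrite /= lte_fin => h.
    by apply: lt_le_trans h _; exact: ler_norm.
  have [N3 _ HN3] := cvgeNy_lt Hal (- K).
  exists N3 => k hk; have := HN3 k hk; rewrite /= lte_fin => h.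
  have := ler_norm (- al k); rewrite normrN; lra.
set k := (N1 + N2 + N3)%N.
have k1 : (N1 <= k)%N by rewrite /k -addnA leq_addr.
have k2 : (N2 <= k)%N by rewrite /k; apply: leq_trans (leq_addl N1 N2) (leq_addr _ _).
have k3 : (N3 <= k)%N by rewrite /k leq_addl.
have := H1 k k1; have := H2 k k2; rewrite !normE !ltcR !subr0 => g2 g1.
have := @small_root_bound _ c d (al k) b (zs k) hc (ltW g1) (ltW g2) (Hr k).
have := H3 k k3; rewrite -/K; lra.
Qed.

End Main.
Theorem proposition2p2 (R : realType) (H : hilbert R)
  (D : set H) (A : H -> H) (B : H -> H) (c d : R) :
  selfadjoint D A -> bounded_selfadjoint B -> (exists x : H, B x != 0) ->
  0 <= c -> 0 < d ->
  let WA := numrange D A in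
  let WB := numrange [set: H] B in
  let W := WOmega c d WA WB in
  [/\ (forall w : R[i], W (Some w) <-> W (Some (- w^*))),
      (W (Some 0) <-> closure (EFin @` WA) 0%:E \/ c = 0),
      (W (Some (delta_plus c d)) <->
         [\/ unbounded_set WA, closure WB 0 | c = 0]),
      (W (Some (delta_minus c d)) <-> unbounded_set WA \/ closure WB 0) &
      (W None <-> unbounded_set WA)].
Proof.
move=> hA hB [x hx] hc hd WA WB W.
have x0 : x != 0.
  case: hB => lin _ _.
  have B0 : B 0 = 0.
    have := lin 1 0 0; rewrite scaler0 addr0 scale1r.
    by rewrite -{1}[B 0]addr0 => /addrI <-.
  by apply: contra hx => /eqP ->; rewrite B0.
have [rA hrA] := @WA_nonempty R H D A hA (ex_intro _ x x0).
have [rB hrB] := @WB_nonempty R H B hB (ex_intro _ x hx).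
have clA : closure (EFin @` WA) rA%:E by apply: subset_closure; exists rA.
have clB : closure WB rB by apply: subset_closure.
have inf_unb : forall a : \bar R, closure (EFin @` WA) a ->
    (forall r : R, a <> r%:E) -> unbounded_set WA.
  case=> [r| |] Ha hn; first by case: (hn r).
    exact: cl_pinf_unb.
  exact: cl_ninf_unb.
have Wnear : forall dl, c%:C - 'i * d%:C * dl - dl^+2 = 0 ->
    unbounded_set WA -> W (Some dl).
  move=> dl hq hu.
  apply: (@W_from_inf R c d WA WB rB (Some dl) _ clB hu (@near_Q R c d rB dl hq)).
  by move=> zs hzs; apply: sph_some.
split.
- move=> w; split; first exact: WO_sym.
  by move/WO_sym; rewrite conj_invol.
- split.
    move=> [a [b [Ha [Hb Hm]]]]; move: Hm; case: a Ha => [r| |] Ha /=.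
    + move=> [w [[<-] hp]].
      have : r%:C * c%:C = 0 :> R[i] by rewrite -hp /pab; ring.
      move/eqP; rewrite mulf_eq0 => /orP[/eqP [hr]|/eqP [hc0]]; last by right.
      by left; rewrite -hr.
    + move=> [al [zs [Hal [Hr Hc]]]]; right.
      case: (eqVneq c 0) => // hc0; exfalso.
      have hc' : 0 < c by rewrite lt_def hc0 hc.
      exact: (@no_zero_lim R c d b +oo%E al zs hc' (or_introl erefl) Hal Hr Hc).
    + move=> [al [zs [Hal [Hr Hc]]]]; right.
      case: (eqVneq c 0) => // hc0; exfalso.
      have hc' : 0 < c by rewrite lt_def hc0 hc.
      exact: (@no_zero_lim R c d b -oo%E al zs hc' (or_intror erefl) Hal Hr Hc).
  move=> [h|hc0].
    exists 0%:E, rB; split => //; split => //; exists 0; split => //.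
    by rewrite /pab rmorph0; ring.
  exists rA%:E, rB; split => //; split => //; exists 0; split => //.
  by rewrite /pab hc0 rmorph0; ring.
- split.
    move=> [a [b [Ha [Hb Hm]]]]; move: Hm; case: a Ha => [r| |] Ha /=.
    + move=> [w [[<-] hp]].
      rewrite pab_delta ?q_delta_plus // in hp.
      move/eqP: hp; rewrite oppr_eq0 mulf_eq0 => /orP[/eqP [hb]|].
        by apply: Or32; rewrite -hb.
      rewrite expf_eq0 /= => /eqP /(@delta_plus0 R c d hd) hc0.
      exact: Or33.
    + by move=> _; apply: Or31; apply: (inf_unb +oo%E).
    + by move=> _; apply: Or31; apply: (inf_unb -oo%E).
  move=> [hu|h0|hc0].
  + exact: Wnear (@q_delta_plus R c d) hu.
  + exists rA%:E, 0; split => //; split => //; exists (delta_plus c d); split => //.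
    by rewrite pab_delta ?q_delta_plus // rmorph0 mul0r oppr0.
  + exists rA%:E, rB; split => //; split => //; exists (delta_plus c d); split => //.
    have -> : delta_plus c d = 0 by apply/(@delta_plus0 R c d hd).
    by rewrite /pab hc0 rmorph0; ring.
- split.
    move=> [a [b [Ha [Hb Hm]]]]; move: Hm; case: a Ha => [r| |] Ha /=.
    + move=> [w [[<-] hp]].
      rewrite pab_delta ?q_delta_minus // in hp.
      move/eqP: hp; rewrite oppr_eq0 mulf_eq0 => /orP[/eqP [hb]|].
        by right; rewrite -hb.
      rewrite expf_eq0 /= => /eqP /(@delta_minus_neq0 R c d hd) [].
    + by move=> _; left; apply: (inf_unb +oo%E).
    + by move=> _; left; apply: (inf_unb -oo%E).
  move=> [hu|h0].
  + exact: Wnear (@q_delta_minus R c d) hu.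
  + exists rA%:E, 0; split => //; split => //; exists (delta_minus c d); split => //.
    by rewrite pab_delta ?q_delta_minus // rmorph0 mul0r oppr0.
- split.
    move=> [a [b [Ha [Hb Hm]]]]; move: Hm; case: a Ha => [r| |] Ha /=.
    + by move=> [w [hw _]].
    + by move=> _; apply: (inf_unb +oo%E).
    + by move=> _; apply: (inf_unb -oo%E).
  move=> hu.
  apply: (@W_from_inf R c d WA WB rB None _ clB hu (@far_Q R c d rB)).
  by move=> zs hzs; apply: sph_none.
Qed.
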